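(* Let $\mathcal{X}$ and $\mathcal{H}$ be finite sets and let $P_\mathcal{D}$ be a probability distribution on $\mathcal{X}$ (the data distribution). Let $\{P_{\theta_I}(\mathbf{x}|\mathbf{h})\}_{\theta_I\in\Theta_I}$ be a family of conditional distributions of $\mathbf{x}\in\mathcal{X}$ given $\mathbf{h}\in\mathcal{H}$ and $\{P_{\theta_J}(\mathbf{h})\}_{\theta_J\in\Theta_J}$ a family of distributions on $\mathcal{H}$, and for $\theta=(\theta_I,\theta_J)$ let $P_\theta(\mathbf{x})=\sum_{\mathbf{h}}P_{\theta_I}(\mathbf{x}|\mathbf{h})P_{\theta_J}(\mathbf{h})$ and $L(\theta)=\mathbb{E}_{\mathbf{x}\sim P_\mathcal{D}}[\log P_\theta(\mathbf{x})]$. Let $\theta^\ast=(\theta_I^\ast,\theta_J^\ast)$ be a maximizer of $L$. Suppose $(\hat\theta_I,\hat q)$ is a maximizer of $$(\theta_I,q)\mapsto \mathbb{E}_{\mathbf{x}\sim P_\mathcal{D}}\Big[\log \sum_{\mathbf{h}} P_{\theta_I}(\mathbf{x}|\mathbf{h})\, q_\mathcal{D}(\mathbf{h})\Big],$$ where $\theta_I$ ranges over $\Theta_I$ and $q$ ranges over all conditional probability distributions $q(\mathbf{h}|\mathbf{x})$ on $\mathcal{H}$ given $\mathbf{x}\in\mathcal{X}$, and $q_\mathcal{D}(\mathbf{h}):=\sum_{\tilde{\mathbf{x}}}q(\mathbf{h}|\tilde{\mathbf{x}})P_\mathcal{D}(\tilde{\mathbf{x}})$. Let $\hat q_\mathcal{D}$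 be the distribution on $\mathcal{H}$ associated with $\hat q$, and assume the maximal value above is finite. Then: (1) If there exists $\hat\theta_J\in\Theta_J$ with $P_{\hat\theta_J}(\mathbf{h})=\hat q_\mathcal{D}(\mathbf{h})$ for all $\mathbf{h}$, then $(\hat\theta_I,\hat\theta_J)$ is a global maximizer of $L$; in particular if the maximizer of $L$ is unique then $(\hat\theta_I,\hat\theta_J)=(\theta_I^\ast,\theta_J^\ast)$. (2) For every $\theta_J\in\Theta_J$, $$L(\theta_I^\ast,\theta_J^\ast)-L(\hat\theta_I,\theta_J)\le \mathrm{KL}\big(\hat q_\mathcal{D}\,\|\,P_{\theta_J}\big).$$
   Context: $\mathrm{KL}(p\|r)=\sum_{\mathbf{h}}p(\mathbf{h})\log\frac{p(\mathbf{h})}{r(\mathbf{h})}$ denotes the Kullback–Leibler divergence (possibly $+\infty$). The parameter $\hat\theta_I$ is called the best optimistic lower layer (BOLL). *)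

(* Defs.v *)
From mathcomp Require Import ssreflect ssrfun ssrbool eqtype ssrnat seq choice fintype.
From Stdlib Require Import Reals.
Set Implicit Arguments.
Unset Strict Implicit.

Open Scope R_scope.

Definition rsum (T : finType) (f : T -> R) : R :=
  foldr (fun x acc => f x + acc) 0 (enum T).

(* Extended reals bounded above: None = -infinity (values of log-likelihoods). *)
Definition eR := option R.

Definition eR_le (a b : eR) : Prop :=
  match a, b with
  | None, _ => True
  | Some _, None => False
  | Some x, Some y => x <= y
  end.

Definition eR_addr (a : eR) (r : R) : eR := option_map (fun b => b + r) a.

Definition is_distr (T : finType) (p : T -> R) : Prop :=
  (forall t, 0 <= p t) /\ rsum p = 1.

Definition is_cond_distr (X H : finType) (q : X -> H -> R) : Prop :=
  forall x, is_distr (q x).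

(* E_{x ~ PD}[ log f(x) ], with value -oo when f(x) <= 0 for some x of positive
   PD-mass; terms with PD x = 0 contribute 0 (convention 0 log 0 = 0). *)
Definition Elog (X : finType) (PD : X -> R) (f : X -> R) : eR :=
  if has (fun x => if Rlt_dec 0 (PD x) then
                     (if Rle_dec (f x) 0 then true else false) else false) (enum X)
  then None
  else Some (rsum (fun x => PD x * ln (f x))).

(* KL(p || r) = sum_h p h log (p h / r h); None = +oo (when p h > 0 = r h). *)
Definition KL (H : finType) (p r : H -> R) : option R :=
  if has (fun h => if Rlt_dec 0 (p h) then
                     (if Rle_dec (r h) 0 then true else false) else false) (enum H)
  then None
  else Some (rsum (fun h => if Rlt_dec 0 (p h) then p h * ln (p h / r h) else 0)).

Definition Pmarg (X H : finType) (TI TJ : Type)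
  (PI : TI -> X -> H -> R) (PJ : TJ -> H -> R) (tI : TI) (tJ : TJ) (x : X) : R :=
  rsum (fun h => PI tI x h * PJ tJ h).

Definition LL (X H : finType) (TI TJ : Type) (PD : X -> R)
  (PI : TI -> X -> H -> R) (PJ : TJ -> H -> R) (tI : TI) (tJ : TJ) : eR :=
  Elog PD (Pmarg PI PJ tI tJ).

Definition qD (X H : finType) (PD : X -> R) (q : X -> H -> R) (h : H) : R :=
  rsum (fun x => q x h * PD x).

Definition Lopt (X H : finType) (TI : Type) (PD : X -> R)
  (PI : TI -> X -> H -> R) (tI : TI) (q : X -> H -> R) : eR :=
  Elog PD (fun x => rsum (fun h => PI tI x h * qD PD q h)).

(* Main.v *)
Require Import Defs.
From mathcomp Require Import ssreflect ssrfun ssrbool eqtype ssrnat seq choice fintype.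
From Stdlib Require Import Reals Lra Psatz FunctionalExtensionality Classical.
Open Scope R_scope.

Definition sumL {T : Type} (l : seq T) (f : T -> R) : R :=
  foldr (fun x acc => f x + acc) 0 l.

Lemma rsumE (T : finType) (f : T -> R) : rsum f = sumL (enum T) f.
Proof. by []. Qed.

Section L.
Variable T : Type.
Implicit Types (l : seq T) (f g : T -> R).

Lemma sumL_add l f g : sumL l (fun x => f x + g x) = sumL l f + sumL l g.
Proof. elim: l => [|x l IH] /=; [lra|rewrite IH; lra]. Qed.
Lemma sumL_sub l f g : sumL l (fun x => f x - g x) = sumL l f - sumL l g.
Proof. elim: l => [|x l IH] /=; [lra|rewrite IH; lra]. Qed.
Lemma sumL_scal l c f : sumL l (fun x => c * f x) = c * sumL l f.
Proof. elim: l => [|x l IH] /=; [lra|rewrite IH; lra]. Qed.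
Lemma sumL_le l f g : (forall x, f x <= g x) -> sumL l f <= sumL l g.
Proof. move=> H; elim: l => [|x l IH] /=; [lra|have := H x; lra]. Qed.
Lemma sumL_ext l f g : (forall x, f x = g x) -> sumL l f = sumL l g.
Proof. move=> H; elim: l => [|x l IH] /=; [lra|rewrite H IH; lra]. Qed.
Lemma sumL_ge0 l f : (forall x, 0 <= f x) -> 0 <= sumL l f.
Proof. move=> H; elim: l => [|x l IH] /=; [lra|have := H x; lra]. Qed.
Lemma sumL_0 l : sumL l (fun _ => 0) = 0.
Proof. elim: l => [|x l IH] /=; [lra|rewrite IH; lra]. Qed.
End L.
Arguments sumL_add {T}. Arguments sumL_sub {T}. Arguments sumL_scal {T}. Arguments sumL_le {T}. Arguments sumL_ext {T}. Arguments sumL_ge0 {T}. Arguments sumL_0 {T}.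

Lemma sumL_swap (A B : Type) (l1 : seq A) (l2 : seq B) (f : A -> B -> R) :
  sumL l1 (fun x => sumL l2 (fun y => f x y)) = sumL l2 (fun y => sumL l1 (fun x => f x y)).
Proof.
elim: l1 => [|x l IH] /=; first by rewrite sumL_0.
by rewrite IH -sumL_add.
Qed.

Lemma sumL_term (T : eqType) (l : seq T) f x : (forall y, 0 <= f y) -> x \in l -> f x <= sumL l f.
Proof.
move=> H; elim: l => [|y l IH] //=; rewrite in_cons => /orP [/eqP ->|Hx].
- have := sumL_ge0 l f H; lra.
- have := IH Hx; have := H y; lra.
Qed.

Lemma sumL_delta0 (T : eqType) (l : seq T) g x0 : x0 \notin l ->
  sumL l (fun x => if x == x0 then g x else 0) = 0.
Proof.
elim: l => [|y l IH] //= ; rewrite in_cons negb_or => /andP [Hy Hl].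
rewrite IH // eq_sym (negbTE Hy); lra.
Qed.

Lemma sumL_delta (T : eqType) (l : seq T) g x0 : uniq l -> x0 \in l ->
  sumL l (fun x => if x == x0 then g x else 0) = g x0.
Proof.
elim: l => [|y l IH] //= /andP [Hy Hu]; rewrite in_cons => /orP [/eqP Hx|Hx].
- subst y; rewrite eqxx sumL_delta0 //; lra.
- have -> : (y == x0) = false by apply/eqP => E; subst; rewrite Hx in Hy.
  rewrite IH //; lra.
Qed.

Lemma sumL_eq_le (T : eqType) (l : seq T) f g : (forall x, f x <= g x) ->
  sumL l f = sumL l g -> forall x, x \in l -> f x = g x.
Proof.
move=> H E x Hx.
have := @sumL_term _ l (fun y => g y - f y) x (fun y => ltac:(have := H y; lra)) Hx.
rewrite sumL_sub E; have := H x; lra.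
Qed.

Lemma ln_le_sub1 z : 0 < z -> ln z <= z - 1.
Proof. move=> Hz; have := exp_ineq1_le (ln z); rewrite exp_ln //; lra. Qed.

Section RS.
Variable T : finType.
Implicit Types (f g : T -> R).
Lemma rsum_add f g : rsum (fun x => f x + g x) = rsum f + rsum g.
Proof. exact: sumL_add. Qed.
Lemma rsum_sub f g : rsum (fun x => f x - g x) = rsum f - rsum g.
Proof. exact: sumL_sub. Qed.
Lemma rsum_scal c f : rsum (fun x => c * f x) = c * rsum f.
Proof. exact: sumL_scal. Qed.
Lemma rsum_le f g : (forall x, f x <= g x) -> rsum f <= rsum g.
Proof. exact: sumL_le. Qed.
Lemma rsum_ext f g : (forall x, f x = g x) -> rsum f = rsum g.
Proof. exact: sumL_ext. Qed.
Lemma rsum_ge0 f : (forall x, 0 <= f x) -> 0 <= rsum f.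
Proof. exact: sumL_ge0. Qed.
Lemma rsum_0 : rsum (fun _ : T => 0) = 0.
Proof. exact: sumL_0. Qed.
Lemma rsum_term f x : (forall y, 0 <= f y) -> f x <= rsum f.
Proof. move=> H; apply: sumL_term => //; by rewrite mem_enum. Qed.
Lemma rsum_delta g x0 : rsum (fun x => if x == x0 then g x else 0) = g x0.
Proof. apply: sumL_delta; [exact: enum_uniq | by rewrite mem_enum]. Qed.
Lemma rsum_eq_le f g : (forall x, f x <= g x) -> rsum f = rsum g -> forall x, f x = g x.
Proof. move=> H E x; apply: (@sumL_eq_le _ (enum T) f g H E x); by rewrite mem_enum. Qed.
End RS.
Arguments rsum_ext {T f} g. Arguments rsum_add {T}. Arguments rsum_sub {T}.
Arguments rsum_scal {T}. Arguments rsum_le {T f g}. Arguments rsum_ge0 {T f}.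
Arguments rsum_0 {T}. Arguments rsum_term {T} f x. Arguments rsum_delta {T}.
Arguments rsum_eq_le {T f g}.

Lemma rsum_swap (A B : finType) (f : A -> B -> R) :
  rsum (fun x => rsum (fun y => f x y)) = rsum (fun y => rsum (fun x => f x y)).
Proof. exact: sumL_swap. Qed.

Lemma Elog_some (X : finType) (PD f : X -> R) : (forall x, 0 < PD x -> 0 < f x) ->
  Elog PD f = Some (rsum (fun x => PD x * ln (f x))).
Proof.
move=> Hp; rewrite /Elog; case: hasP => // [[x _]].
case: Rlt_dec => // Hx; case: Rle_dec => // Hl; have := Hp x Hx; lra.
Qed.

Lemma Elog_inv (X : finType) (PD f : X -> R) v : Elog PD f = Some v ->
  (forall x, 0 < PD x -> 0 < f x) /\ v = rsum (fun x => PD x * ln (f x)).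
Proof.
rewrite /Elog; case: hasP => // Hn [<-]; split => // x Hx.
apply: Rnot_le_lt => Hl; apply: Hn; exists x; first by rewrite mem_enum.
by case: Rlt_dec => //; case: Rle_dec.
Qed.

Lemma KL_inv (H : finType) (p r : H -> R) k : KL p r = Some k ->
  (forall h, 0 < p h -> 0 < r h) /\
  k = rsum (fun h => if Rlt_dec 0 (p h) then p h * ln (p h / r h) else 0).
Proof.
rewrite /KL; case: hasP => // Hn [<-]; split => // x Hx.
apply: Rnot_le_lt => Hl; apply: Hn; exists x; first by rewrite mem_enum.
by case: Rlt_dec => //; case: Rle_dec.
Qed.

Lemma Rdiv_le_0_compat a b : 0 <= a -> 0 < b -> 0 <= a / b.
Proof. move=> Ha Hb; unfold Rdiv; apply: Rmult_le_pos => //; left; exact: Rinv_0_lt_compat. Qed.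

Lemma core_deriv s a t : 0 < s -> 0 <= a -> 0 < t <= 1/2 ->
  t * ((a / s - 1) - 2 * t * (a / s - 1) ^ 2) <= ln ((1 - t) * s + t * a) - ln s.
Proof.
move=> Hs Ha Ht.
have Hb : 0 <= a / s by apply: Rdiv_le_0_compat; lra.
set b := a / s in Hb *.
have Ea : a = b * s by rewrite /b; field; lra.
clearbody b; subst a.
have E : (1 - t) * s + t * (b * s) = s * (1 + t * (b - 1)) by ring.
have Hz : 0 < 1 + t * (b - 1) by nra.
rewrite E ln_mult //.
have Hl := @ln_le_sub1 (/ (1 + t * (b - 1))) (Rinv_0_lt_compat _ Hz).
rewrite ln_Rinv // in Hl.
have K : 1 - / (1 + t * (b - 1)) = t * (b - 1) / (1 + t * (b - 1)) by field; lra.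
suff : t * ((b - 1) - 2 * t * (b - 1) ^ 2) <= t * (b - 1) / (1 + t * (b - 1)) by lra.
have Hzz : 0 <= 1 + 2 * t * (b - 1) by nra.
have EE : t * (b - 1) / (1 + t * (b - 1)) - t * ((b - 1) - 2 * t * (b - 1) ^ 2) =
   t * (t * (b - 1) ^ 2 * (1 + 2 * t * (b - 1))) / (1 + t * (b - 1)).
  field; lra.
suff : 0 <= t * (t * (b - 1) ^ 2 * (1 + 2 * t * (b - 1))) / (1 + t * (b - 1)) by rewrite -EE; lra.
apply: Rdiv_le_0_compat => //.
apply: Rmult_le_pos; [lra|]. apply: Rmult_le_pos => //. apply: Rmult_le_pos; [lra|apply: pow2_ge_0].
Qed.

Lemma limit_arg D C : (forall t, 0 < t <= 1/2 -> D <= 2 * t * C) -> D <= 0.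
Proof.
move=> H; apply: Rnot_lt_le => HD.
have H1 := H (1/2) ltac:(lra).
have HC : 0 < C by lra.
have := H (D / (4 * C)) ltac:(split; [apply: Rdiv_lt_0_compat; lra | apply Rmult_le_reg_r with (4*C); [lra|field_simplify; lra]]).
have -> : 2 * (D / (4 * C)) * C = D / 2 by field; lra.
lra.
Qed.

Lemma eR_le_trans a b c : eR_le a b -> eR_le b c -> eR_le a c.
Proof. case: a => [x|] //; case: b => [y|] //; case: c => [z|] //= ; lra. Qed.

Lemma qD_const (X H : finType) (PD : X -> R) (p : H -> R) h :
  rsum PD = 1 -> qD PD (fun _ => p) h = p h.
Proof. move=> E; rewrite /qD rsum_scal E; ring. Qed.

Theorem theorem1 (X H : finType) (TI TJ : Type)
  (PD : X -> R) (PI : TI -> X -> H -> R) (PJ : TJ -> H -> R)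
  (hPD : is_distr PD)
  (hPI : forall tI h, is_distr (fun x => PI tI x h))
  (hPJ : forall tJ, is_distr (PJ tJ))
  (tIs : TI) (tJs : TJ)
  (hstar : forall tI tJ, eR_le (LL PD PI PJ tI tJ) (LL PD PI PJ tIs tJs))
  (tIh : TI) (qh : X -> H -> R)
  (hqh : is_cond_distr qh)
  (hopt : forall tI q, is_cond_distr q -> eR_le (Lopt PD PI tI q) (Lopt PD PI tIh qh))
  (hfin : exists v, Lopt PD PI tIh qh = Some v) :
  (forall tJh : TJ, (forall h, PJ tJh h = qD PD qh h) ->
     (forall tI tJ, eR_le (LL PD PI PJ tI tJ) (LL PD PI PJ tIh tJh)) /\
     ((forall aI aJ, (forall tI tJ, eR_le (LL PD PI PJ tI tJ) (LL PD PI PJ aI aJ)) ->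
                     aI = tIs /\ aJ = tJs) ->
      tIh = tIs /\ tJh = tJs)) /\
  (forall tJ : TJ,
     match KL (qD PD qh) (PJ tJ) with
     | None => True
     | Some k => eR_le (LL PD PI PJ tIs tJs) (eR_addr (LL PD PI PJ tIh tJ) k)
     end).
Proof.
case: hPD => PD0 PD1.
have LLE : forall tI tJ, LL PD PI PJ tI tJ = Lopt PD PI tI (fun _ => PJ tJ).
  move=> tI tJ; rewrite /LL /Lopt /Pmarg; f_equal; apply: functional_extensionality => x.
  apply: rsum_ext => h; by rewrite qD_const.
have cdJ : forall tJ, is_cond_distr (fun _ : X => PJ tJ) by move=> tJ x; exact: hPJ.
have LLopt : forall tI tJ, eR_le (LL PD PI PJ tI tJ) (Lopt PD PI tIh qh).
  by move=> tI tJ; rewrite LLE; apply: hopt.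
split.
  move=> tJh EJ.
  have E : LL PD PI PJ tIh tJh = Lopt PD PI tIh qh.
    rewrite LLE /Lopt; f_equal; apply: functional_extensionality => x.
    apply: rsum_ext => h; by rewrite qD_const // EJ.
  have P1 : forall tI tJ, eR_le (LL PD PI PJ tI tJ) (LL PD PI PJ tIh tJh) by rewrite E.
  split => // Hu; exact: Hu _ _ P1.
move=> tJ.
case EK : (KL (qD PD qh) (PJ tJ)) => [k|] //.
pose a := PI tIh.
pose pi := qD PD qh.
pose r := PJ tJ.
have a0 : forall x h, 0 <= a x h by move=> x h; exact: (hPI tIh h).1 x.
have r0 : forall h, 0 <= r h by move=> h; exact: (hPJ tJ).1 h.
have pi0 : forall h, 0 <= pi h.
  move=> h; apply: rsum_ge0 => x; apply: Rmult_le_pos; [exact: (hqh x).1 | exact: PD0].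
have pi1 : rsum pi = 1.
  rewrite /pi /qD rsum_swap -PD1; apply: rsum_ext => x.
  rewrite (rsum_ext (fun h => PD x * qh x h)) ?rsum_scal ?(hqh x).2; [ring | move=> h; ring].
case: hfin => v Hv.
have [spos0 Ev] := @Elog_inv X PD _ v Hv.
pose s x := rsum (fun h => a x h * pi h).
have spos : forall x, 0 < PD x -> 0 < s x by move=> x Hx; exact: spos0 x Hx.
have {}Ev : v = rsum (fun x => PD x * ln (s x)) := Ev.
have D1 : forall h0, rsum (fun x => PD x * (a x h0 / s x)) <= 1.
  move=> h0.
  suff : rsum (fun x => PD x * (a x h0 / s x - 1)) <= 0.
    rewrite (rsum_ext (fun x => PD x * (a x h0 / s x) - PD x)) ?rsum_sub ?PD1; [lra | move=> x; ring].
  apply: (@limit_arg _ (rsum (fun x => PD x * (a x h0 / s x - 1) ^ 2))) => t Ht.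
  pose q' := fun (_ : X) (h : H) => (1 - t) * pi h + t * (if h == h0 then 1 else 0).
  have cq : is_cond_distr q'.
    move=> x; split.
      move=> h; rewrite /q'; case: eqP => _; have := pi0 h; nra.
    rewrite /q' rsum_add !rsum_scal pi1 (rsum_delta (fun _ => 1) h0); ring.
  have Lq : Lopt PD PI tIh q' = Elog PD (fun x => (1 - t) * s x + t * a x h0).
    rewrite /Lopt; f_equal; apply: functional_extensionality => x.
    rewrite (rsum_ext (fun h => (1 - t) * (a x h * pi h) + t * (if h == h0 then a x h else 0))).
      by rewrite rsum_add !rsum_scal (rsum_delta (fun h => a x h) h0).
    move=> h; rewrite /q' qD_const //; case: eqP => _; rewrite /a; ring.
  rewrite Elog_some in Lq; last first.
    move=> x Hx; have := spos x Hx; have := a0 x h0; nra.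
  have := hopt tIh q' cq; rewrite Lq Hv => /= Hle; rewrite Ev in Hle.
  have Hper : forall x, t * (PD x * (a x h0 / s x - 1) - 2 * t * (PD x * (a x h0 / s x - 1) ^ 2))
      <= PD x * ln ((1 - t) * s x + t * a x h0) - PD x * ln (s x).
    move=> x; case: (Rle_lt_or_eq_dec _ _ (PD0 x)) => Hx.
      have K := @core_deriv _ _ t (spos x Hx) (a0 x h0) Ht.
      have K2 := Rmult_le_compat_l _ _ _ (Rlt_le _ _ Hx) K.
      nra.
    rewrite -Hx; ring_simplify; lra.
  have := rsum_le Hper.
  rewrite rsum_scal rsum_sub rsum_scal rsum_sub.
  move=> H2; move: Hle H2.
  set D := rsum _; set C := rsum _.
  set E1 := rsum (fun x => PD x * (a x h0 / s x - 1)).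
  set E2 := rsum (fun x => PD x * (a x h0 / s x - 1) ^ 2).
  move=> K1 K2; case: Ht => Ht1 Ht2.
  apply: Rnot_lt_le => K3.
  have : 0 < t * (E1 - 2 * t * E2) by apply: Rmult_lt_0_compat; lra.
  lra.
have Ueq : forall h, rsum (fun x => PD x * (a x h * pi h / s x)) = pi h.
  apply: (@rsum_eq_le H (fun h => rsum (fun x => PD x * (a x h * pi h / s x))) pi).
    move=> h; rewrite (rsum_ext (fun x => pi h * (PD x * (a x h / s x)))) ?rsum_scal.
      have := D1 h; have := pi0 h; nra.
    move=> x; rewrite /Rdiv; ring.
  rewrite rsum_swap pi1 -PD1; apply: rsum_ext => x.
  case: (Rle_lt_or_eq_dec _ _ (PD0 x)) => Hx.
    have sx := spos x Hx.
    rewrite (rsum_ext (fun h => PD x / s x * (a x h * pi h))) ?rsum_scal.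
      change (rsum (fun h => a x h * pi h)) with (s x); field; lra.
    move=> h; field; lra.
  rewrite -Hx (rsum_ext (fun _ => 0)) ?rsum_0 // => h; rewrite /Rdiv; ring.
have [rpos Ek] := @KL_inv H _ _ k EK.
pose tt x := rsum (fun h => a x h * r h).
have tpos : forall x, 0 < PD x -> 0 < tt x.
  move=> x Hx; have sx := spos x Hx.
  case: (classic (exists h, 0 < a x h * pi h)) => [[h Hh]|Hn].
    have pih : 0 < pi h.
      case: (Rle_lt_or_eq_dec _ _ (pi0 h)) => // E; rewrite -E Rmult_0_r in Hh; lra.
    have ah : 0 < a x h.
      case: (Rle_lt_or_eq_dec _ _ (a0 x h)) => // E; rewrite -E Rmult_0_l in Hh; lra.
    have := rsum_term (fun h => a x h * r h) h (fun h => Rmult_le_pos _ _ (a0 x h) (r0 h)).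
    move=> K2; have K1 : 0 < r h := rpos h pih.
    rewrite /tt; have := Rmult_lt_0_compat _ _ ah K1; lra.
  exfalso; suff : s x <= 0 by lra.
  rewrite -(@rsum_0 H); apply: rsum_le => h; apply: Rnot_lt_le => Hh; apply: Hn; by exists h.
have LLt : LL PD PI PJ tIh tJ = Some (rsum (fun x => PD x * ln (tt x))).
  exact: (@Elog_some X PD _ tpos).
apply: (eR_le_trans _ _ _ (LLopt tIs tJs)).
rewrite Hv LLt /= Ev Ek.
pose c x h := if Rlt_dec 0 (pi h) then a x h * pi h / s x * ln (pi h / r h) else 0.
have Hper : forall x, PD x * ln (s x) - PD x * ln (tt x) <= PD x * rsum (c x).
  move=> x; case: (Rle_lt_or_eq_dec _ _ (PD0 x)) => Hx; last by rewrite -Hx; ring_simplify; lra.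
  suff K : ln (s x) - ln (tt x) <= rsum (c x).
    have K2 := Rmult_le_compat_l _ _ _ (Rlt_le _ _ Hx) K; nra.
  have sx := spos x Hx; have tx := tpos x Hx.
  pose w h := if Rlt_dec 0 (pi h) then a x h * pi h / s x else 0.
  have w0 : forall h, 0 <= w h.
    move=> h; rewrite /w; case: (Rlt_dec 0 (pi h)) => Hp0 /=; last lra.
    apply: Rdiv_le_0_compat => //; apply: Rmult_le_pos; [exact: a0 | exact: pi0].
  have w1 : rsum w = 1.
    rewrite (rsum_ext (fun h => / s x * (a x h * pi h))) ?rsum_scal.
      change (rsum (fun h => a x h * pi h)) with (s x); field; lra.
    move=> h; rewrite /w; case: (Rlt_dec 0 (pi h)) => Hp /=; first by field; lra.
    have E : pi h = 0 by have := pi0 h; lra.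
    rewrite E; field; lra.
  have Hh : forall h, (ln (s x) - ln (tt x)) * w h - c x h <=
      (if Rlt_dec 0 (pi h) then a x h * r h / tt x else 0) - w h.
    move=> h; rewrite /w /c; case: (Rlt_dec 0 (pi h)) => Hp /=; last lra.
    have rh : 0 < r h := rpos h Hp.
    have ww : 0 <= a x h * pi h / s x.
      apply: Rdiv_le_0_compat => //; apply: Rmult_le_pos; [exact: a0 | exact: pi0].
    have zpos : 0 < r h * s x / (pi h * tt x).
      apply: Rdiv_lt_0_compat; apply: Rmult_lt_0_compat => //.
    have Hl := @ln_le_sub1 _ zpos.
    have Ez : ln (r h * s x / (pi h * tt x)) = ln (r h) + ln (s x) - ln (pi h) - ln (tt x).
      rewrite /Rdiv ln_mult ?ln_mult ?ln_Rinv ?ln_mult //; try lra;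
        try (apply: Rmult_lt_0_compat => //); try (apply: Rinv_0_lt_compat; apply: Rmult_lt_0_compat => //).
    have Ep : ln (pi h / r h) = ln (pi h) - ln (r h).
      rewrite /Rdiv ln_mult ?ln_Rinv //; try lra; try (apply: Rinv_0_lt_compat; lra).
    have Ew : a x h * pi h / s x * (r h * s x / (pi h * tt x)) = a x h * r h / tt x.
      field; lra.
    have K := Rmult_le_compat_l _ _ _ ww Hl.
    rewrite Ez in K; rewrite Ep; nra.
  have := rsum_le Hh.
  rewrite rsum_sub rsum_scal w1 rsum_sub w1.
  have : rsum (fun h => if Rlt_dec 0 (pi h) then a x h * r h / tt x else 0) <= 1.
    apply: (Rle_trans _ (rsum (fun h => / tt x * (a x h * r h)))).
      apply: rsum_le => h; case: (Rlt_dec 0 (pi h)) => Hp0 /=.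
        right; field; lra.
      apply: Rmult_le_pos; [left; exact: Rinv_0_lt_compat | exact: Rmult_le_pos].
    rewrite rsum_scal; change (rsum (fun h => a x h * r h)) with (tt x); right; field; lra.
  lra.
have := rsum_le Hper.
rewrite rsum_sub.
rewrite (@rsum_ext X (fun x => PD x * rsum (c x)) (fun x => rsum (fun h => PD x * c x h))); last by move=> x; rewrite rsum_scal.
rewrite rsum_swap.
rewrite (@rsum_ext H (fun h => rsum (fun x => PD x * c x h)) (fun h => if Rlt_dec 0 (pi h) then pi h * ln (pi h / r h) else 0)).
  rewrite -/pi -/r; lra.
move=> h; rewrite /c; case: (Rlt_dec 0 (pi h)) => Hp /=.
  rewrite (rsum_ext (fun x => ln (pi h / r h) * (PD x * (a x h * pi h / s x)))) ?rsum_scal ?Ueq.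
    ring.
  move=> x; ring.
rewrite (@rsum_ext X (fun x => PD x * 0) (fun _ => 0)); [exact: rsum_0 | move=> x; ring].
Qed.
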